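(* Let $G$ be a finite group and $n\ge1$. Every linear character of $HG_n$ is of the form $\Theta_{\xi,\pi}$ for some $\xi\in\mathcal{L}(G)$ and $\pi\in\mathcal{L}(H_n)$, i.e. $\mathcal{L}(HG_n)=\{\Theta_{\xi,\pi}\mid\xi\in\mathcal{L}(G),\ \pi\in\mathcal{L}(H_n)\}$.
   Context: $\mathcal{L}(X)$ denotes the set of linear characters of a group $X$. $SG_{2n}=G\wr S_{2n}=\{(g_1,\dots,g_{2n};\sigma)\}$ with multiplication $(g;\sigma)(h;\tau)=(g_1h_{\sigma^{-1}(1)},\dots,g_{2n}h_{\sigma^{-1}(2n)};\sigma\tau)$. $H_n\subset S_{2n}$ is the hyperoctahedral group (centralizer of $(12)(34)\cdots(2n-1\,2n)$), whose linear characters are $1,\delta,\iota,\delta\otimes\iota$ with $\delta$ the restriction of the sign of $S_{2n}$ and $\iota(\sigma)$ the sign of the permutation of the blocks $\{1,2\},\dots,\{2n-1,2n\}$ induced by $\sigma$. $HG_n=\{(g_1,g_1,\dots,g_n,g_n;\sigma)\mid g_i\in G,\sigma\in H_n\}$ and $\Theta_{\xi,\pi}(g_1,g_1,\dots,g_n,g_n;\sigma)=\xi(g_1g_2\cdots g_n)\pi(\sigma)$. *)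

(* Defs.v *)
From HB Require Import structures.
From mathcomp Require Import all_boot all_order all_algebra all_fingroup all_solvable all_field all_character.
Set Implicit Arguments.
Unset Strict Implicit.
Unset Printing Implicit Defensive.
Import GRing.Theory Num.Theory.
Local Open Scope group_scope.

Section Wreath.
Variables (gT : finGroupType) (m : nat).

Record wr_type := WR { wr_f : {ffun 'I_m -> gT}; wr_p : {perm 'I_m} }.
Definition wr_to_pair (x : wr_type) := (wr_f x, wr_p x).
Definition wr_of_pair (p : {ffun 'I_m -> gT} * {perm 'I_m}) := WR p.1 p.2.
Lemma wr_pairK : cancel wr_to_pair wr_of_pair. Proof. by case. Qed.
HB.instance Definition _ := Finite.copy wr_type (can_type wr_pairK).

(* Paper's multiplication:
   (g;s)(h;t) = (g_1 h_{s^-1(1)}, ..., g_m h_{s^-1(m)}; s o t).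
   In MathComp, (t * s) is the composite "s o t" (apply t first). *)
Definition wr_mul (x y : wr_type) : wr_type :=
  WR [ffun i => wr_f x i * wr_f y ((wr_p x)^-1 i)] (wr_p y * wr_p x)%g.
Definition wr_one : wr_type := WR [ffun => 1] 1.
Definition wr_inv (x : wr_type) : wr_type :=
  WR [ffun i => (wr_f x (wr_p x i))^-1] (wr_p x)^-1.

Lemma wr_mulA : associative wr_mul.
Proof.
move=> [g s] [h t] [k r]; rewrite /wr_mul /=; congr WR; last by rewrite mulgA.
by apply/ffunP=> i; rewrite !ffunE mulgA invMg permM.
Qed.

Lemma wr_mul1 : left_id wr_one wr_mul.
Proof.
move=> [g s]; rewrite /wr_mul /=; congr WR; last by rewrite mulg1.
by apply/ffunP=> i; rewrite !ffunE mul1g invg1 perm1.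
Qed.

Lemma wr_mulV : left_inverse wr_one wr_inv wr_mul.
Proof.
move=> [g s]; rewrite /wr_mul /=; congr WR; last by rewrite mulgV.
by apply/ffunP=> i; rewrite !ffunE invgK mulVg.
Qed.

HB.instance Definition _ := Finite_isGroup.Build wr_type wr_mulA wr_mul1 wr_mulV.

End Wreath.

Section Hyperoctahedral.
Variable n : nat.

Lemma blk0_subproof (i : 'I_n) : (i.*2 < n.*2)%N.
Proof. by rewrite ltn_double. Qed.
Lemma blk1_subproof (i : 'I_n) : (i.*2.+1 < n.*2)%N.
Proof. by rewrite -doubleS leq_double. Qed.

(* 0-indexed positions 2i and 2i+1 of the i-th block {2i+1, 2i+2} (1-indexed). *)
Definition blk0 (i : 'I_n) : 'I_(n.*2) := Ordinal (blk0_subproof i).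
Definition blk1 (i : 'I_n) : 'I_(n.*2) := Ordinal (blk1_subproof i).

(* The involution (1 2)(3 4)...(2n-1 2n), 0-indexed: j <-> j xor 1. *)
Definition swap_fun (j : 'I_(n.*2)) : 'I_(n.*2) :=
  insubd j (if odd j then j.-1 else j.+1).

Lemma swap_lt (j : 'I_(n.*2)) : ((if odd j then j.-1 else j.+1) < n.*2)%N.
Proof.
have jlt := ltn_ord j.
case: ifP => oj; first by rewrite (leq_ltn_trans (leq_pred _)).
case: (ltngtP j.+1 n.*2) => // Hj; first by move: Hj; rewrite ltnS leqNgt jlt.
by have := congr1 odd Hj; rewrite odd_double /= oj.
Qed.

Lemma swap_val (j : 'I_(n.*2)) :
  val (swap_fun j) = if odd j then j.-1 else j.+1.
Proof. by rewrite /swap_fun insubdK //; apply: swap_lt. Qed.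

Lemma swap_funK : involutive swap_fun.
Proof.
move=> j; apply: val_inj; rewrite !swap_val.
case: j => [[|k] kl] //=.
by case ok: (odd k) => /=; rewrite ?ok.
Qed.

Definition swap_perm : {perm 'I_(n.*2)} := perm (can_inj swap_funK).

Definition Hn : {group {perm 'I_(n.*2)}} := 'C[swap_perm]%G.

End Hyperoctahedral.

Section HG.
Variables (gT : finGroupType) (n : nat).

Definition HG_set : {set wr_type gT n.*2} :=
  [set x | (wr_p x \in Hn n) && [forall i : 'I_n, wr_f x (blk0 i) == wr_f x (blk1 i)]].

Lemma swap_perm_blk (i : 'I_n) : swap_perm n (blk0 i) = blk1 i.
Proof.
by apply: val_inj; rewrite /swap_perm permE swap_val /= odd_double.
Qed.

Lemma HG_blockP (g : {ffun 'I_(n.*2) -> gT}) :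
  [forall i : 'I_n, g (blk0 i) == g (blk1 i)] ->
  forall j, g (swap_perm n j) = g j.
Proof.
move=> /forallP H j.
have [i Hi] : exists i : 'I_n, j = blk0 i \/ j = blk1 i.
  have jlt : (j./2 < n)%N by rewrite -(ltn_double) (leq_ltn_trans _ (ltn_ord j)) // -{2}(odd_double_half j) leq_addl.
  exists (Ordinal jlt); case oj: (odd j); [right|left]; apply: val_inj => /=;
  by rewrite -[LHS](odd_double_half j) oj.
case: Hi => ->; rewrite ?swap_perm_blk ?(eqP (H i)) //.
rewrite -swap_perm_blk -permM.
have -> : (swap_perm n * swap_perm n)%g = 1%g.
  by apply/permP=> k; rewrite permM perm1 !permE swap_funK.
by rewrite perm1 swap_perm_blk (eqP (H i)).
Qed.

Lemma HG_setE x : (x \in HG_set) =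
  (wr_p x \in Hn n) && [forall i : 'I_n, wr_f x (blk0 i) == wr_f x (blk1 i)].
Proof. by rewrite /HG_set in_set. Qed.

Lemma HG_group_set : group_set HG_set.
Proof.
apply/group_setP; split.
  rewrite HG_setE /= group1; apply/forallP=> i; by rewrite !ffunE.
move=> [g s] [h t]; rewrite !HG_setE /= => /andP [sH gB] /andP [tH hB].
rewrite groupM //=.
apply/forallP=> i; rewrite !ffunE (eqP (forallP gB i)) -swap_perm_blk.
apply/eqP; congr (_ * _); rewrite -permM.
have /cent1P cs : s^-1 \in 'C[swap_perm n] by rewrite groupV.
by rewrite -cs permM (HG_blockP hB).
Qed.

Canonical HG := group HG_group_set.

Definition Theta (xi : 'CF([set: gT])) (pi : 'CF(Hn n)) (x : wr_type gT n.*2) : algC :=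
  (xi (\prod_(i < n) wr_f x (blk0 i))%g * pi (wr_p x))%R.

End HG.

(* Main.v *)
Require Import Defs.
From HB Require Import structures.
From mathcomp Require Import all_boot all_order all_algebra all_fingroup all_solvable all_field all_character.
From mathcomp Require Import zify.
Set Implicit Arguments. Unset Strict Implicit. Unset Printing Implicit Defensive.
Import GRing.Theory Num.Theory.

Section Comb.
Variable n : nat.

Lemma half_lt (k : 'I_(n.*2)) : (k./2 < n)%N.
Proof.
by rewrite -(ltn_double) (leq_ltn_trans _ (ltn_ord k)) // -{2}(odd_double_half k) leq_addl.
Qed.
Definition half_ord (k : 'I_(n.*2)) : 'I_n := Ordinal (half_lt k).

Lemma ord2_eq (a b : 'I_(n.*2)) : a./2 = b./2 -> odd a = odd b -> a = b.
Proof.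
move=> h o; apply: val_inj => /=.
by rewrite -(odd_double_half a) -(odd_double_half b) h o.
Qed.

Lemma half_blk0 i : half_ord (blk0 i) = i.
Proof. by apply: val_inj => /=; rewrite doubleK. Qed.
Lemma half_blk1 i : half_ord (blk1 i) = i.
Proof. by apply: val_inj => /=; rewrite uphalf_double. Qed.

Lemma swap_half j : (swap_perm n j)./2 = j./2.
Proof.
rewrite /swap_perm permE swap_val; case: j => [[|k] kl] //=.
case ok: (odd k) => /=.
  by rewrite uphalf_half ok.
by rewrite uphalf_half ok.
Qed.

Lemma swap_odd j : odd (swap_perm n j) = ~~ odd j.
Proof.
rewrite /swap_perm permE swap_val; case: j => [[|k] kl] //=.
by case ok: (odd k) => /=; rewrite ?negbK ?ok.
Qed.

Lemma lift_lt (rho : {perm 'I_n}) (k : 'I_(n.*2)) :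
  ((rho (half_ord k)).*2 + odd k < n.*2)%N.
Proof. have h := ltn_ord (rho (half_ord k)); case: (odd k); [rewrite addn1 -doubleS leq_double | rewrite addn0 ltn_double]; exact: h. Qed.

Definition lift_fun rho k : 'I_(n.*2) := Ordinal (lift_lt rho k).

Lemma lift_half rho k : (lift_fun rho k)./2 = rho (half_ord k).
Proof. by rewrite /= addnC half_bit_double. Qed.
Lemma lift_odd rho k : odd (lift_fun rho k) = odd k.
Proof. by rewrite /= oddD odd_double oddb. Qed.

Lemma lift_inj rho : injective (lift_fun rho).
Proof.
move=> a b e; apply: ord2_eq; last by rewrite -(lift_odd rho a) e lift_odd.
have := lift_half rho a; rewrite e lift_half => /val_inj/perm_inj.
by move/(congr1 val).
Qed.

Definition liftp rho : {perm 'I_(n.*2)} := perm (@lift_inj rho).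

Lemma liftpE rho k : liftp rho k = lift_fun rho k.
Proof. by rewrite permE. Qed.

Lemma liftp_half rho k : half_ord (liftp rho k) = rho (half_ord k).
Proof. by apply: val_inj; rewrite /= liftpE lift_half. Qed.

Lemma liftp_Hn rho : liftp rho \in Hn n.
Proof.
apply/cent1P; apply/permP => k; rewrite !permM; apply: ord2_eq.
  rewrite swap_half !liftpE !lift_half; congr (val (rho _)); apply: val_inj => /=.
  by rewrite swap_half.
by rewrite swap_odd !liftpE !lift_odd swap_odd.
Qed.

Lemma Hn_comm q k : q \in Hn n -> q (swap_perm n k) = swap_perm n (q k).
Proof. by move/cent1P => c; rewrite -permM -c permM. Qed.

Lemma Hn_half_inj q : q \in Hn n -> injective (fun i => half_ord (q (blk0 i))).
Proof.
move=> qH i j /= e.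
have eh : (q (blk0 i))./2 = (q (blk0 j))./2 by have := congr1 val e.
case: (boolP (odd (q (blk0 i)) == odd (q (blk0 j)))) => [/eqP o|o].
  have /perm_inj/(congr1 val) /= := ord2_eq eh o.
  by move/double_inj => ij; apply: val_inj.
have : q (blk0 i) = swap_perm n (q (blk0 j)).
  apply: ord2_eq; first by rewrite swap_half.
  by rewrite swap_odd; move: o; case: (odd _); case: (odd _).
rewrite -Hn_comm // swap_perm_blk => /perm_inj/(congr1 (fun k : 'I_(n.*2) => odd k)).
by move=> /=; rewrite !odd_double.
Qed.

End Comb.
Section G.
Variables (gT : finGroupType) (m : nat).
Lemma wr_mulE (x y : wr_type gT m) : (x * y)%g = wr_mul x y.
Proof. by []. Qed.
Lemma wr_invE (x : wr_type gT m) : (x^-1)%g = wr_inv x.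
Proof. by []. Qed.
Lemma wr_oneE : (1 : wr_type gT m)%g = wr_one gT m.
Proof. by []. Qed.
End G.

Section Grp.
Variables (gT : finGroupType) (n : nat).
Local Notation W := (wr_type gT n.*2).

Definition eb (i : 'I_n) (h : gT) : W :=
  WR [ffun k => if half_ord k == i then h else 1%g] 1%g.
Definition pe (s : {perm 'I_(n.*2)}) : W := WR [ffun => 1%g] s.

Lemma mulWR1 (a b : {ffun 'I_(n.*2) -> gT}) :
  (WR a 1 * WR b 1 = WR [ffun k => a k * b k] 1 :> W)%g.
Proof.
rewrite wr_mulE /wr_mul /=; congr WR; last by rewrite mulg1.
by apply/ffunP=> k; rewrite !ffunE invg1 perm1.
Qed.

Lemma decomp (x : W) : x = (WR (wr_f x) 1 * pe (wr_p x))%g.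
Proof.
case: x => g s; rewrite wr_mulE /wr_mul /=; congr WR; last by rewrite mulg1.
by apply/ffunP=> k; rewrite !ffunE mulg1.
Qed.

Lemma block_eq (x : W) k : x \in HG gT n -> wr_f x k = wr_f x (blk0 (half_ord k)).
Proof.
rewrite HG_setE => /andP[_ /forallP B].
have hb0 j : (blk0 j : nat)./2 = j := congr1 val (half_blk0 j).
have hb1 j : (blk1 j : nat)./2 = j := congr1 val (half_blk1 j).
have [E|E] : k = blk0 (half_ord k) \/ k = blk1 (half_ord k).
  case ok: (odd k); [right|left]; apply: ord2_eq;
    rewrite ?hb0 ?hb1 //= ?odd_double ?ok //.
  by rewrite {1}E.
by rewrite {1}E (eqP (B _)).
Qed.

Lemma eb_in i h : eb i h \in HG gT n.
Proof.
rewrite HG_setE group1 /=; apply/forallP=> j.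
by rewrite !ffunE half_blk0 half_blk1.
Qed.

Lemma pe_in s : s \in Hn n -> pe s \in HG gT n.
Proof. by move=> sH; rewrite HG_setE sH /=; apply/forallP=> j; rewrite !ffunE. Qed.

Lemma ebM i h h' : (eb i h * eb i h' = eb i (h * h'))%g.
Proof.
rewrite mulWR1; congr WR; apply/ffunP=> k; rewrite !ffunE.
by case: ifP; rewrite ?mulg1.
Qed.

Lemma peM s t : (pe s * pe t = pe (t * s))%g.
Proof.
rewrite wr_mulE /wr_mul /=; congr WR.
by apply/ffunP=> k; rewrite !ffunE mulg1.
Qed.

Lemma eb1 i : eb i 1 = 1%g.
Proof.
rewrite wr_oneE /eb /wr_one; congr WR.
by apply/ffunP=> k; rewrite !ffunE if_same.
Qed.

Lemma prodWR (r : seq 'I_n) (a : 'I_n -> {ffun 'I_(n.*2) -> gT}) :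
  (\prod_(i <- r) WR (a i) 1 = WR [ffun k => \prod_(i <- r) a i k] 1 :> W)%g.
Proof.
elim: r => [|i r IH].
  rewrite big_nil wr_oneE; congr WR.
  by apply/ffunP=> k; rewrite !ffunE big_nil.
rewrite big_cons IH mulWR1; congr WR.
by apply/ffunP=> k; rewrite !ffunE big_cons.
Qed.

Lemma prod_eb (h : 'I_n -> gT) :
  (\prod_(i < n) eb i (h i) = WR [ffun k => h (half_ord k)] 1 :> W)%g.
Proof.
rewrite prodWR; congr WR; apply/ffunP=> k; rewrite !ffunE.
under eq_bigr do rewrite ffunE.
by rewrite -big_mkcond (big_pred1 (half_ord k)) // => i; rewrite /= eq_sym.
Qed.

Lemma x_decomp x : x \in HG gT n ->
  x = (\prod_(i < n) eb i (wr_f x (blk0 i)) * pe (wr_p x))%g.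
Proof.
move=> xH; rewrite prod_eb {1}(decomp x); congr (WR _ _ * _)%g.
apply/ffunP=> k; rewrite ffunE; exact: block_eq _ xH.
Qed.

Lemma eb_conj i0 i h :
  (eb i0 h ^ pe (liftp (tperm i0 i)) = eb i h)%g.
Proof.
rewrite conjgE !wr_mulE wr_invE /wr_mul /wr_inv /=; congr WR.
  apply/ffunP=> k; rewrite !ffunE.
  rewrite invgK invg1 mul1g mulg1 liftp_half.
  by rewrite -[X in _ == X](tpermR i0 i) (inj_eq perm_inj).
by rewrite mulg1 mulgV.
Qed.

End Grp.

Lemma lin_of_hom (gT : finGroupType) (G : {group gT}) (f : gT -> algC) :
  f 1%g = 1%R -> {in G &, forall x y, f (x * y)%g = (f x * f y)%R} ->
  exists lam : 'CF(G), lam \is a linear_char /\ {in G, forall x, lam x = f x}.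
Proof.
move=> f1 fM.
have rGmx : mx_repr G (fun x => (scalar_mx (f x) : 'M[algC]_1)).
  split; first by rewrite f1.
  by move=> x y Gx Gy /=; rewrite fM // scalar_mxM.
pose rG := MxRepresentation rGmx.
exists (cfRepr rG); split.
  by rewrite qualifE /= cfRepr_char cfRepr1 eqxx.
by move=> x Gx; rewrite cfunE Gx mulr1n /= mxtrace_scalar.
Qed.

Section Main.
Variables (gT : finGroupType) (n : nat).
Local Notation W := (wr_type gT n.*2).

Lemma xi_prod (xi : 'CF([set: gT])) (a : 'I_n -> gT) : xi \is a linear_char ->
  xi (\prod_(i < n) a i)%g = (\prod_(i < n) xi (a i))%R.
Proof. by move=> lx; apply: lin_char_prod => // i _; rewrite in_setT. Qed.

Lemma Theta1 xi pi : xi \is a linear_char -> pi \is a linear_char ->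
  Theta xi pi (1%g : W) = 1%R.
Proof.
move=> lx lp; rewrite /Theta xi_prod //.
rewrite wr_oneE /wr_one /= (lin_char1 lp) mulr1 big1 // => i _.
by rewrite ffunE lin_char1.
Qed.

Lemma ThetaM xi pi : xi \is a linear_char -> pi \is a linear_char ->
  {in HG gT n &, forall x y, Theta xi pi (x * y)%g = (Theta xi pi x * Theta xi pi y)%R}.
Proof.
move=> lx lp x y xH yH; rewrite /Theta !xi_prod // wr_mulE /wr_mul /=.
move: (xH) (yH); rewrite !HG_setE => /andP[pxH _] /andP[pyH _].
rewrite (lin_charM lp) //.
under eq_bigr do rewrite ffunE (lin_charM lx) ?in_setT //.
rewrite big_split /=.
have pinvH : ((wr_p x)^-1)%g \in Hn n by rewrite groupV.
have -> : (\prod_(i < n) xi (wr_f y (((wr_p x)^-1)%g (blk0 i))) =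
           \prod_(i < n) xi (wr_f y (blk0 i)))%R.
  rewrite [RHS](reindex_inj (Hn_half_inj pinvH)) /=.
  by apply: eq_bigr => i _; rewrite (block_eq _ yH).
by rewrite [(pi _ * pi _)%R]mulrC mulrACA.
Qed.

End Main.

Theorem proposition4p2 (gT : finGroupType) (n : nat) (hn : (1 <= n)%N) :
  (forall lam : 'CF(HG gT n), lam \is a linear_char ->
     exists (xi : 'CF([set: gT])) (pi : 'CF(Hn n)),
       [/\ xi \is a linear_char, pi \is a linear_char &
           {in HG gT n, forall x, lam x = Theta xi pi x}]) /\
  (forall (xi : 'CF([set: gT])) (pi : 'CF(Hn n)),
     xi \is a linear_char -> pi \is a linear_char ->
     exists lam : 'CF(HG gT n),
       lam \is a linear_char /\ {in HG gT n, forall x, lam x = Theta xi pi x}).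
Proof.
split; last first.
  move=> xi pi lx lp.
  have [lam [ll El]] := lin_of_hom (G := HG gT n) (Theta1 (n := n) lx lp) (ThetaM lx lp).
  by exists lam; split.
move=> lam ll; pose i0 : 'I_n := Ordinal hn.
have f1 : lam (eb i0 1) = 1%R by rewrite eb1 lin_char1.
have fM : {in [set: gT] &, forall a b, lam (eb i0 (a * b)) = (lam (eb i0 a) * lam (eb i0 b))%R}.
  by move=> a b _ _; rewrite -ebM (lin_charM ll) // eb_in.
have [xi [lxi Exi]] := @lin_of_hom gT [set: gT]%G (fun h => lam (eb i0 h)) f1 fM.
have g1 : lam (pe gT 1) = 1%R by rewrite (_ : pe gT 1 = 1%g) // lin_char1.
have gM : {in Hn n &, forall s t, lam (pe gT (s * t)) = (lam (pe gT s) * lam (pe gT t))%R}.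
  by move=> s t sH tH /=; rewrite -peM (lin_charM ll) ?pe_in // mulrC.
have [pi [lpi Epi]] := @lin_of_hom _ (Hn n) (fun s => lam (pe gT s)) g1 gM.
exists xi, pi; split => // x xH.
have pxH : wr_p x \in Hn n by move: xH; rewrite HG_setE => /andP[].
have prH : (\prod_(i < n) eb i (wr_f x (blk0 i)) \in HG gT n)%g.
  by apply: group_prod => i _; exact: eb_in.
rewrite {1}(x_decomp xH) (lin_charM ll) ?pe_in //.
rewrite (lin_char_prod ll) => [|i _]; last exact: eb_in.
rewrite /Theta xi_prod // Epi //; congr (_ * _)%R.
apply: eq_bigr => i _.
by rewrite Exi ?in_setT // -(eb_conj i0 i) cfunJ // pe_in // liftp_Hn.
Qed.
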